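(* Let $u_0\in C(\mathbb{R})$ satisfy $u_0(x)>0$ for all $x\in\mathbb{R}$, $\liminf_{x\to-\infty}u_0(x)>0$, $u_0(x)\to0$ as $x\to+\infty$, and suppose there is a constant $\xi_0$ such that $u_0\in C^2([\xi_0,+\infty))$, $u_0'\le0$ on $[\xi_0,+\infty)$, and $u_0''(x)/u_0(x)\to0$ as $x\to+\infty$. Then: (i) $u_0'(x)/u_0(x)\to0$ as $x\to+\infty$; (ii) for every $\kappa>0$ there exists $x_\kappa$ such that $u_0(x)\ge e^{-\kappa x}$ for all $x\in[x_\kappa,+\infty)$; (iii) for any $\gamma_1>0$, $\gamma_2>0$ and $\rho_1>\rho_2>0$, if functions $y_1(t)$, $y_2(t)$ satisfy $u_0(y_1(t))=\gamma_1e^{-\rho_1t}$ and $u_0(y_2(t))=\gamma_2e^{-\rho_2t}$ for all $t>0$ large enough, then $\lim_{t\to+\infty}(y_1(t)-y_2(t))=+\infty$. *)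

(* Defs.v *)
From Stdlib Require Import Reals.
From Coquelicot Require Import Coquelicot.
Open Scope R_scope.

Definition has_deriv_on_ge (a : R) (f f' : R -> R) : Prop :=
  forall x, a <= x ->
    filterlim (fun h => (f (x + h) - f x) / h)
      (within (fun h => h <> 0 /\ a <= x + h) (locally 0))
      (locally (f' x)).

Definition cont_on_ge (a : R) (f : R -> R) : Prop :=
  forall x, a <= x ->
    filterlim f (within (fun y => a <= y) (locally x)) (locally (f x)).

Definition C2_on_ge (a : R) (f f1 f2 : R -> R) : Prop :=
  has_deriv_on_ge a f f1 /\ has_deriv_on_ge a f1 f2 /\ cont_on_ge a f2.

(* Main.v *)
Require Import Defs.
From Stdlib Require Import Reals Lra.
From Coquelicot Require Import Coquelicot.
Open Scope R_scope.

Lemma deriv_int a f f' x : has_deriv_on_ge a f f' -> a < x -> is_derive f x (f' x).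
Proof.
intros H Hx. apply is_derive_Reals. intros eps Heps.
specialize (H x (Rlt_le _ _ Hx)).
assert (Hb : locally (f' x) (ball (f' x) eps)) by (exists (mkposreal eps Heps); auto).
specialize (H _ Hb). destruct H as [d Hd].
assert (Hd0 : 0 < Rmin d (x - a)) by (apply Rmin_pos; [apply cond_pos | lra]).
exists (mkposreal _ Hd0). intros h Hh0 Hh. simpl in Hh.
assert (Hh1 : Rabs h < d) by (eapply Rlt_le_trans; [apply Hh| apply Rmin_l]).
assert (Hh2 : Rabs h < x - a) by (eapply Rlt_le_trans; [apply Hh| apply Rmin_r]).
assert (B : ball 0 d h).
{ unfold ball; simpl; unfold AbsRing_ball, abs, minus, plus, opp; simpl. now rewrite Ropp_0, Rplus_0_r. }
specialize (Hd h B). 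
assert (C : h <> 0 /\ a <= x + h).
{ split; auto. apply Rabs_def2 in Hh2. lra. }
specialize (Hd C). unfold ball in Hd; simpl in Hd; unfold AbsRing_ball, abs, minus, plus, opp in Hd; simpl in Hd.
exact Hd.
Qed.

Lemma mono_gen (f df : R -> R) (p q : R) :
  (forall y, p <= y <= q -> is_derive f y (df y) /\ 0 <= df y) -> p <= q -> f p <= f q.
Proof.
intros H Hpq.
destruct (MVT_gen f p q df) as [c [Hc E]].
- intros y Hy. rewrite Rmin_left, Rmax_right in Hy by lra. apply H; lra.
- intros y Hy. rewrite Rmin_left, Rmax_right in Hy by lra.
  apply continuity_pt_filterlim. apply (@ex_derive_continuous R_AbsRing R_NormedModule f y). eexists. apply H; lra.
- rewrite Rmin_left, Rmax_right in Hc by lra.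
  assert (0 <= df c) by (apply H; lra).
  assert (0 <= df c * (q - p)) by (apply Rmult_le_pos; lra). lra.
Qed.

Lemma nonincr (u0 u1 : R -> R) xi0 :
  (forall x, xi0 < x -> is_derive u0 x (u1 x)) ->
  (forall x, xi0 <= x -> u1 x <= 0) ->
  forall p q, xi0 < p -> p <= q -> u0 q <= u0 p.
Proof.
intros D H p q Hp Hpq.
assert (- u0 p <= - u0 q); [|lra].
apply (mono_gen (fun y => - u0 y) (fun y => - u1 y)); auto.
intros y Hy. split.
- assert (Dy := D y ltac:(lra)). auto_derive.
  + eexists; eauto.
  + rewrite (is_derive_unique (fun x0 : R => u0 x0) y (u1 y) Dy). ring.
- assert (u1 y <= 0) by (apply H; lra). lra.
Qed.

Lemma part_i (u0 u1 u2 : R -> R) xi0 :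
  (forall x, 0 < u0 x) ->
  (forall x, xi0 < x -> is_derive u0 x (u1 x)) ->
  (forall x, xi0 < x -> is_derive u1 x (u2 x)) ->
  (forall x, xi0 <= x -> u1 x <= 0) ->
  is_lim (fun x => u2 x / u0 x) p_infty 0 ->
  is_lim (fun x => u1 x / u0 x) p_infty 0.
Proof.
intros Hp D0 D1 Hu1 L2.
apply is_lim_spec. intros d.
destruct d as [d Hd]. simpl.
set (e := d * d / 4).
assert (He : 0 < e) by (unfold e; nra).
apply is_lim_spec in L2. destruct (L2 (mkposreal e He)) as [X1 HX1]. simpl in HX1.
exists (Rmax X1 xi0). intros x Hx.
assert (Hx1 : X1 < x) by (eapply Rle_lt_trans; [apply Rmax_l|exact Hx]).
assert (Hx0 : xi0 < x) by (eapply Rle_lt_trans; [apply Rmax_r|exact Hx]).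
assert (Hu2 : forall y, x <= y -> u2 y <= e * u0 y).
{ intros y Hy. assert (A1 := HX1 y ltac:(lra)). assert (A2 := Hp y).
  apply Rabs_def2 in A1. destruct A1 as [A1 _].
  rewrite Rminus_0_r in A1.
  apply (Rmult_lt_compat_r (u0 y)) in A1; auto.
  unfold Rdiv in A1. rewrite Rmult_assoc, Rinv_l in A1 by lra. lra. }
assert (F1 : forall y, x <= y -> 0 <= u1 x + (y-x)*e*u0 x - u1 y).
{ intros y Hy.
  replace 0 with (u1 x + (x-x)*e*u0 x - u1 x) by ring.
  apply (mono_gen (fun y => u1 x + (y-x)*e*u0 x - u1 y) (fun y => e * u0 x - u2 y)); auto.
  intros z Hz. split.
  - assert (Dz := D1 z ltac:(lra)). auto_derive.
    + eexists; eauto.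
    + rewrite (is_derive_unique (fun x0 : R => u1 x0) z (u2 z) Dz). ring.
  - assert (u0 z <= u0 x) by (apply (nonincr u0 u1 xi0); auto; lra).
    assert (u2 z <= e * u0 z) by (apply Hu2; lra).
    nra. }
set (h := 2 / d).
assert (Hh : 0 < h) by (unfold h; apply Rdiv_lt_0_compat; lra).
assert (F0 : 0 <= u0 x + h*u1 x + h^2*e*u0 x/2 - u0 (x+h)).
{ replace 0 with (u0 x + (x-x)*u1 x + (x-x)^2*e*u0 x/2 - u0 x) by field.
  replace h with ((x+h)-x) at 1 2 by ring.
  apply (mono_gen (fun y => u0 x + (y-x)*u1 x + (y-x)^2*e*u0 x/2 - u0 y) (fun y => u1 x + (y-x)*e*u0 x - u1 y)); [|lra].
  intros z Hz. split.
  - assert (Dz := D0 z ltac:(lra)). auto_derive.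
    + eexists; eauto.
    + rewrite (is_derive_unique (fun x0 : R => u0 x0) z (u1 z) Dz). field.
  - apply F1; lra. }
assert (P1 := Hp (x+h)). assert (P0 := Hp x).
assert (U1 := Hu1 x ltac:(lra)).
rewrite Rminus_0_r.
assert (Q : u1 x / u0 x <= 0).
{ unfold Rdiv. apply Rmult_le_0_r; auto. left; apply Rinv_0_lt_compat; auto. }
rewrite Rabs_left1 by auto.
assert (K : - u1 x * h < u0 x * (1 + h^2*e/2)) by nra.
assert (K2 : - (u1 x / u0 x) < (1 + h^2*e/2) / h).
{ apply (Rmult_lt_reg_r (u0 x * h)). nra.
  replace (- (u1 x / u0 x) * (u0 x * h)) with (- u1 x * h) by (field; lra).
  replace ((1 + h ^ 2 * e / 2) / h * (u0 x * h)) with (u0 x * (1 + h^2*e/2)) by (field; lra).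
  exact K. }
replace ((1 + h^2*e/2)/h) with (3*d/4) in K2 by (unfold h, e; field; lra).
lra.
Qed.

Lemma max_lt a b t : Rmax a b < t -> a < t /\ b < t.
Proof. intros H. split; eapply Rle_lt_trans; eauto; [apply Rmax_l|apply Rmax_r]. Qed.

Lemma exp_small r a t : 0 < r -> 0 < a -> - ln a / r < t -> exp (- r * t) < a.
Proof.
intros Hr Ha Ht. rewrite <- (exp_ln a) by auto. apply exp_increasing.
apply (Rmult_lt_compat_l r) in Ht; auto.
replace (r * (- ln a / r)) with (- ln a) in Ht by (field; lra). lra.
Qed.

Lemma growth (u0 u1 : R -> R) xi0 :
  (forall x, 0 < u0 x) ->
  (forall x, xi0 < x -> is_derive u0 x (u1 x)) ->
  is_lim (fun x => u1 x / u0 x) p_infty 0 ->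
  forall eps, 0 < eps -> exists X, xi0 < X /\
    forall p q, X <= p -> p <= q -> u0 p * exp (eps * p) <= u0 q * exp (eps * q).
Proof.
intros Hp D0 L eps He.
apply is_lim_spec in L. destruct (L (mkposreal eps He)) as [X1 HX1]. simpl in HX1.
exists (Rmax X1 xi0 + 1). split.
{ assert (xi0 <= Rmax X1 xi0) by apply Rmax_r. lra. }
intros p q Hp1 Hpq.
apply (mono_gen (fun y => u0 y * exp (eps * y)) (fun y => (u1 y + eps * u0 y) * exp (eps * y))); auto.
intros z Hz.
assert (X1 <= Rmax X1 xi0) by apply Rmax_l.
assert (xi0 <= Rmax X1 xi0) by apply Rmax_r.
split.
- assert (Dz := D0 z ltac:(lra)). auto_derive.
  + eexists; eauto.
  + rewrite (is_derive_unique (fun x0 : R => u0 x0) z (u1 z) Dz). ring.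
- apply Rmult_le_pos; [|left; apply exp_pos].
  assert (A1 := HX1 z ltac:(lra)). apply Rabs_def2 in A1. destruct A1 as [_ A1].
  rewrite Rminus_0_r in A1. assert (A2 := Hp z).
  apply (Rmult_lt_compat_r (u0 z)) in A1; auto.
  unfold Rdiv in A1. rewrite Rmult_assoc, Rinv_l in A1 by lra. lra.
Qed.

Theorem lemma2p3 (u0 u1 u2 : R -> R) (xi0 : R) :
  (forall x, continuous u0 x) ->
  (forall x, 0 < u0 x) ->
  (* liminf_{x -> -oo} u0 x > 0 *)
  (exists c, 0 < c /\ exists M, forall x, x <= M -> c <= u0 x) ->
  is_lim u0 p_infty 0 ->
  (* u0 in C^2([xi0,+oo)) with u0' = u1, u0'' = u2 on [xi0,+oo) *)
  C2_on_ge xi0 u0 u1 u2 ->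
  (forall x, xi0 <= x -> u1 x <= 0) ->
  is_lim (fun x => u2 x / u0 x) p_infty 0 ->
  (* (i) *)
  is_lim (fun x => u1 x / u0 x) p_infty 0 /\
  (* (ii) *)
  (forall kappa, 0 < kappa ->
     exists xk, forall x, xk <= x -> exp (- kappa * x) <= u0 x) /\
  (* (iii) *)
  (forall (g1 g2 r1 r2 : R) (y1 y2 : R -> R),
     0 < g1 -> 0 < g2 -> 0 < r2 -> r2 < r1 ->
     (exists T, forall t, T < t ->
        u0 (y1 t) = g1 * exp (- r1 * t) /\ u0 (y2 t) = g2 * exp (- r2 * t)) ->
     is_lim (fun t => y1 t - y2 t) p_infty p_infty).
Proof.
intros Hc Hp [c [Hc0 [M HM]]] L0 [Dd0 [Dd1 _]] Hu1 L2.
assert (D0 : forall x, xi0 < x -> is_derive u0 x (u1 x)) by (intros; eapply deriv_int; eauto).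
assert (D1 : forall x, xi0 < x -> is_derive u1 x (u2 x)) by (intros; eapply deriv_int; eauto).
assert (Li : is_lim (fun x => u1 x / u0 x) p_infty 0) by (eapply part_i; eauto).
split; [exact Li|split].
- intros k Hk.
  destruct (growth u0 u1 xi0 Hp D0 Li (k/2) ltac:(lra)) as [X [HX G]].
  set (cc := u0 X * exp (k/2 * X)).
  assert (Hcc : 0 < cc) by (unfold cc; apply Rmult_lt_0_compat; [apply Hp|apply exp_pos]).
  exists (Rmax X (- ln cc / (k/2) + 1)). intros x Hx.
  assert (Hx1 : X <= x) by (eapply Rle_trans; [apply Rmax_l|exact Hx]).
  assert (Hx2 : - ln cc / (k/2) < x) by (eapply Rlt_le_trans; [|eapply Rle_trans; [apply Rmax_r|exact Hx]]; lra).
  assert (E1 := exp_small (k/2) cc x ltac:(lra) Hcc Hx2).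
  assert (G1 := G X x (Rle_refl _) Hx1). fold cc in G1.
  replace (- k * x) with (- (k/2) * x + - (k/2) * x) by field. rewrite exp_plus.
  assert (Q : exp (- (k/2) * x) * exp (k/2 * x) = 1).
  { rewrite <- exp_plus. replace (- (k / 2) * x + k / 2 * x) with 0 by ring. apply exp_0. }
  assert (P1 := exp_pos (- (k/2) * x)). assert (P2 := exp_pos (k/2 * x)).
  assert (exp (- (k / 2) * x) * exp (- (k / 2) * x) <= exp (- (k/2) * x) * cc) by (apply Rmult_le_compat_l; lra).
  assert (exp (- (k/2) * x) * cc <= exp (- (k/2) * x) * (u0 x * exp (k/2 * x))) by (apply Rmult_le_compat_l; lra).
  replace (exp (- (k/2) * x) * (u0 x * exp (k/2 * x))) with (u0 x * (exp (- (k/2) * x) * exp (k/2 * x))) in H0 by ring.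
  rewrite Q in H0. lra.
- intros g1 g2 r1 r2 y1 y2 Hg1 Hg2 Hr2 Hr12 [T HT].
  destruct (growth u0 u1 xi0 Hp D0 Li 1 ltac:(lra)) as [X [HX G]].
  assert (Hm : exists m, 0 < m /\ forall y, y <= X -> m <= u0 y).
  { destruct (Rle_lt_dec X M) as [HXM|HXM].
    - exists c. split; auto. intros y Hy. apply HM. lra.
    - destruct (continuity_ab_min u0 M X ltac:(lra)) as [mx [Hmx1 Hmx2]].
      { intros z _. apply continuity_pt_filterlim. apply Hc. }
      exists (Rmin c (u0 mx)). split. { apply Rmin_pos; auto. }
      intros y Hy. destruct (Rle_lt_dec y M).
      + eapply Rle_trans; [apply Rmin_l|]. auto.
      + eapply Rle_trans; [apply Rmin_r|]. apply Hmx1. lra. }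
  destruct Hm as [m [Hm0 Hm]].
  apply is_lim_spec. intros Mt. simpl.
  set (s := r1 - r2).
  assert (Hs : 0 < s) by (unfold s; lra).
  exists (Rmax (Rmax T (- ln (m/g1) / r1)) (Rmax (- ln (m/g2) / r2) (Rmax (- ln (g2/g1) / s) (- ln (g2/g1) / s + Mt / s)))).
  intros t Ht.
  apply max_lt in Ht. destruct Ht as [Ha Hb]. apply max_lt in Ha. destruct Ha as [Ha1 Ha2].
  apply max_lt in Hb. destruct Hb as [Hb1 Hb2]. apply max_lt in Hb2. destruct Hb2 as [Hb2 Hb3].
  destruct (HT t Ha1) as [E1 E2].
  assert (Hm1 : 0 < m / g1) by (apply Rdiv_lt_0_compat; auto).
  assert (Hm2 : 0 < m / g2) by (apply Rdiv_lt_0_compat; auto).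
  assert (Hgg : 0 < g2 / g1) by (apply Rdiv_lt_0_compat; auto).
  assert (S1 := exp_small r1 (m/g1) t ltac:(lra) Hm1 Ha2).
  assert (S2 := exp_small r2 (m/g2) t ltac:(lra) Hm2 Hb1).
  assert (S3 := exp_small s (g2/g1) t Hs Hgg Hb2).
  assert (S4 := exp_small s (g2/g1) (t - Mt/s) Hs Hgg ltac:(lra)).
  assert (Er : exp (- r1 * t) = exp (- s * t) * exp (- r2 * t)).
  { rewrite <- exp_plus. f_equal. unfold s. ring. }
  assert (P1 := exp_pos (- r1 * t)). assert (P2 := exp_pos (- r2 * t)). assert (P3 := exp_pos (- s * t)).
  assert (Y1 : X < y1 t).
  { destruct (Rle_lt_dec (y1 t) X) as [h|h]; auto. assert (Q := Hm _ h). rewrite E1 in Q.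
    apply (Rmult_lt_compat_l g1) in S1; auto. replace (g1 * (m/g1)) with m in S1 by (field; lra). lra. }
  assert (Y2 : X < y2 t).
  { destruct (Rle_lt_dec (y2 t) X) as [h|h]; auto. assert (Q := Hm _ h). rewrite E2 in Q.
    apply (Rmult_lt_compat_l g2) in S2; auto. replace (g2 * (m/g2)) with m in S2 by (field; lra). lra. }
  assert (Lt12 : u0 (y1 t) < u0 (y2 t)).
  { rewrite E1, E2, Er.
    apply (Rmult_lt_compat_l g1) in S3; auto. replace (g1 * (g2/g1)) with g2 in S3 by (field; lra).
    apply (Rmult_lt_compat_r (exp (- r2 * t))) in S3; auto. lra. }
  assert (Y12 : y2 t <= y1 t).
  { destruct (Rle_lt_dec (y2 t) (y1 t)) as [h|h]; auto.
    assert (u0 (y2 t) <= u0 (y1 t)) by (apply (nonincr u0 u1 xi0); auto; lra). lra. }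
  assert (G1 := G (y2 t) (y1 t) ltac:(lra) Y12).
  rewrite !Rmult_1_l in G1.
  destruct (Rle_lt_dec (y1 t - y2 t) Mt) as [h|h]; auto.
  exfalso.
  assert (Ey : exp (y1 t) <= exp Mt * exp (y2 t)).
  { rewrite <- exp_plus. destruct (Req_dec (y1 t) (Mt + y2 t)) as [e|e].
    - rewrite e; lra.
    - left; apply exp_increasing; lra. }
  assert (PY1 := exp_pos (y1 t)). assert (PY2 := exp_pos (y2 t)). assert (PM := exp_pos Mt).
  assert (K : u0 (y2 t) * exp (y2 t) <= u0 (y1 t) * exp Mt * exp (y2 t)).
  { eapply Rle_trans; [exact G1|]. rewrite Rmult_assoc. apply Rmult_le_compat_l; [left; apply Hp|exact Ey]. }
  assert (K2 : u0 (y2 t) <= u0 (y1 t) * exp Mt) by (apply (Rmult_le_reg_r (exp (y2 t))); auto).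
  rewrite E1, E2, Er in K2.
  assert (Es : exp (- s * (t - Mt / s)) = exp (- s * t) * exp Mt).
  { rewrite <- exp_plus. f_equal. field. lra. }
  rewrite Es in S4.
  apply (Rmult_lt_compat_l g1) in S4; auto. replace (g1 * (g2/g1)) with g2 in S4 by (field; lra).
  apply (Rmult_lt_compat_r (exp (- r2 * t))) in S4; auto.
  lra.
Qed.
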